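(* Let $\mathcal{R}$ be any list over $[K]$ and define its attraction gap $$\Delta(\mathcal{R})=\sum_{k=1}^{K-1}\mathbb{1}\{\alpha(\mathcal{R}(k+1))-\alpha(\mathcal{R}(k))>0\}\,(\alpha(\mathcal{R}(k+1))-\alpha(\mathcal{R}(k))).$$ Then $$\sum_{k=1}^K\big(\chi(\mathcal{R}^*,k)\alpha(k)-\chi(\mathcal{R},k)\alpha(\mathcal{R}(k))\big)\le K\chi_{\max}\Delta(\mathcal{R}).$$
   Context: Items are $[K]$; a list $\mathcal{R}$ is an ordering of all $K$ items, $\mathcal{R}(k)$ being the item at position $k$. $\alpha\in[0,1]^K$ are attraction probabilities with $\alpha(1)>\dots>\alpha(K)>0$, and $\chi(\mathcal{R},k)\in[0,1]$ is the examination probability of position $k$ in list $\mathcal{R}$. $\mathcal{R}^*=(1,\dots,K)$ and $\chi_{\max}=\chi(\mathcal{R}^*,1)$. Assumed (among the paper's standing assumptions A1–A5): (A3) $\chi(\mathcal{R},k)\ge\chi(\mathcal{R},\ell)$ for $k<\ell$; (A5) $\chi(\mathcal{R},k)\ge\chi(\mathcal{R}^*,k)$ for all lists $\mathcal{R}$ and positions $k$; and also (A1) $\sum_k\chi(\mathcal{R},k)\alpha(\mathcal{R}(k))\le\sum_k\chi(\mathcal{R}^*,k)\alpha(k)$ for all $\mathcal{R}$, (A2) $\chi(\mathcal{R},k)$ depends only on the set $\{\mathcal{R}(1),\dots,\mathcal{R}(k-1)\}$, (A4) if $\mathcal{R},\mathcal{R}'$ differ only by exchanging the items at positions $k<\ell$,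 then $\alpha(\mathcal{R}(k))\le\alpha(\mathcal{R}(\ell))\iff\chi(\mathcal{R},\ell)\ge\chi(\mathcal{R}',\ell)$. *)

(* Defs.v *)
From mathcomp Require Import all_boot all_order all_fingroup all_algebra.
Set Implicit Arguments. Unset Strict Implicit. Unset Printing Implicit Defensive.
Import Order.TTheory GRing.Theory Num.Theory.
Local Open Scope ring_scope.

(* Items and positions are 'I_n.+1 (so K = n.+1, positions 0-indexed).
   A list is a permutation R : {perm 'I_n.+1}; R k is the item at position k.
   The optimal list R^* is the identity permutation 1%g. *)

Definition attraction_gap (F : realFieldType) (n : nat)
  (alpha : 'I_n.+1 -> F) (R : {perm 'I_n.+1}) : F :=
  \sum_(k < n)
    (0 < alpha (R (inord k.+1)) - alpha (R (inord k)))%R%:R *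
    (alpha (R (inord k.+1)) - alpha (R (inord k))).

Definition prefix_set (n : nat) (R : {perm 'I_n.+1}) (k : 'I_n.+1) : {set 'I_n.+1} :=
  [set R i | i : 'I_n.+1 & (i < k)%N].

(* Main.v *)
Require Import Defs.
From mathcomp Require Import all_boot all_order all_fingroup all_algebra.
From mathcomp Require Import lra.
Import Order.TTheory GRing.Theory Num.Theory.
Local Open Scope ring_scope.

Lemma pigeon (n : nat) (R : {perm 'I_n.+1}) (k : 'I_n.+1) :
  exists j : 'I_n.+1, (k <= j)%N && (R j <= k)%N.
Proof.
case: (boolP [exists j : 'I_n.+1, (k <= j)%N && (R j <= k)%N]).
  by move=> /existsP.
rewrite negb_exists => /forallP H.
have f_lt : forall i : 'I_k.+1, ((R^-1)%g (widen_ord (ltn_ord k) i) < k)%N.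
  move=> i; have := H ((R^-1)%g (widen_ord (ltn_ord k) i)).
  have hi : (i <= k)%N by exact: (ltn_ord i).
  by rewrite permKV /= hi andbT -ltnNge.
pose f := fun i => Ordinal (f_lt i).
have finj : injective f.
  move=> i1 i2 /(congr1 val) /= /val_inj /perm_inj /(congr1 val) /= h.
  exact: val_inj.
by have := @leq_card _ _ f finj; rewrite !card_ord ltnn.
Qed.

Theorem lemma2 (F : realFieldType) (n : nat)
  (alpha : 'I_n.+1 -> F)
  (chi : {perm 'I_n.+1} -> 'I_n.+1 -> F)
  (alpha_range : forall i, 0 < alpha i <= 1)
  (alpha_decr : forall i j : 'I_n.+1, (i < j)%N -> alpha j < alpha i)
  (chi_range : forall R k, 0 <= chi R k <= 1)
  (A1 : forall R : {perm 'I_n.+1},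
      \sum_(k < n.+1) chi R k * alpha (R k) <= \sum_(k < n.+1) chi 1%g k * alpha k)
  (A2 : forall (R R' : {perm 'I_n.+1}) (k : 'I_n.+1),
      prefix_set R k = prefix_set R' k -> chi R k = chi R' k)
  (A3 : forall R (k l : 'I_n.+1), (k < l)%N -> chi R l <= chi R k)
  (A4 : forall (R : {perm 'I_n.+1}) (k l : 'I_n.+1), (k < l)%N ->
      (alpha (R k) <= alpha (R l)) = (chi ((tperm k l) * R)%g l <= chi R l))
  (A5 : forall R k, chi 1%g k <= chi R k)
  (R : {perm 'I_n.+1}) :
  \sum_(k < n.+1) (chi 1%g k * alpha k - chi R k * alpha (R k))
    <= n.+1%:R * chi 1%g ord0 * attraction_gap alpha R.
Proof.
pose d (i : nat) := alpha (R (inord i.+1)) - alpha (R (inord i)).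
pose p (i : nat) := (0 < d i)%R%:R * d i.
have pge0 : forall i, 0 <= p i.
  by move=> i; rewrite /p; case: (boolP (0 < d i)) => h; rewrite ?mul1r ?mul0r // ltW.
have pged : forall i, d i <= p i.
  move=> i; rewrite /p; case: (boolP (0 < d i)) => h; rewrite ?mul1r ?mul0r //.
  by rewrite leNgt.
have gapE : attraction_gap alpha R = \sum_(0 <= i < n) p i.
  by rewrite big_mkord.
have tele : forall (k j : nat), (k <= j)%N -> (j <= n)%N ->
    alpha (R (inord j)) - alpha (R (inord k)) <= \sum_(k <= i < j) p i.
  move=> k; elim=> [|j IH] hk hj.
    by move: hk; rewrite leqn0 => /eqP ->; rewrite subrr big_geq.
  case: (ltngtP k j.+1) hk => // [hkj|<-] _; last by rewrite subrr big_geq.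
  rewrite big_nat_recr //=.
  have := IH hkj (ltnW hj); have := pged j; rewrite /d; lra.
have gap0 : 0 <= attraction_gap alpha R.
  by rewrite gapE; apply: sumr_ge0 => i _.
have bnd : forall k : 'I_n.+1, alpha k - alpha (R k) <= attraction_gap alpha R.
  move=> k; have [j /andP [hkj hRj]] := @pigeon n R k.
  have h1 : alpha k <= alpha (R j).
    case: (ltngtP (R j) k) hRj => // [h|h] _.
      exact: ltW (alpha_decr _ _ h).
    by rewrite (val_inj h).
  have := tele k j hkj (ltnSE (ltn_ord j)).
  rewrite !inord_val => h2.
  have h3 : \sum_(k <= i < j) p i <= attraction_gap alpha R.
    have hjn : (j <= n)%N := ltnSE (ltn_ord j).
    have hkn : (k <= n)%N := leq_trans hkj hjn.
    rewrite gapE (big_cat_nat (leq0n k) hkn) /= (big_cat_nat hkj hjn) /=.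
    have : 0 <= \sum_(0 <= i < k) p i by apply: sumr_ge0.
    have : 0 <= \sum_(j <= i < n) p i by apply: sumr_ge0.
    lra.
  lra.
rewrite -mulrA mulr_natl.
apply: (@le_trans _ _ (\sum_(k < n.+1) (chi 1%g ord0 * attraction_gap alpha R))); last first.
  by rewrite sumr_const card_ord.
apply: ler_sum => k _.
have ha : 0 <= chi 1%g k <= chi 1%g ord0.
  case/andP: (chi_range 1%g k) => -> _ /=.
  case: (posnP k) => h; last exact: A3.
  by have -> : k = ord0 by apply: val_inj.
have hb := A5 R k.
have hy := alpha_range (R k).
have hx := bnd k.
set a := chi 1%g k in ha hb *; set b := chi R k in hb *.
set c := chi 1%g ord0 in ha *.
set D := attraction_gap alpha R in gap0 hx *.
move: ha hy => /andP [ha0 hac] /andP [hy0 _].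
nra.
Qed.
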